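(* Let $J^r:\mathbb{R}^n\to\mathbb{R}^k$ be continuously differentiable, let $\epsilon\in[0,\infty)^k$, and let $$P_2^r:=\Big\{u\in\mathbb{R}^n:\min_{\alpha\in\Delta_k}\big(\|DJ^r(u)^\top\alpha\|_2^2-(\alpha^\top\epsilon)^2\big)\le 0\Big\}.$$ Then for every $\tilde u\in P_2^r$ there exists a continuously differentiable $\tilde J:\mathbb{R}^n\to\mathbb{R}^k$ with $$\sup_{u\in\mathbb{R}^n}\|\nabla\tilde J_i(u)-\nabla J^r_i(u)\|_2\le\epsilon_i\quad\text{for all } i\in\{1,\dots,k\}$$ such that $\tilde u$ is Pareto critical for $\tilde J$.
   Context: $\Delta_k:=\{\alpha\in[0,\infty)^k:\sum_{i=1}^k\alpha_i=1\}$. $DJ(u)\in\mathbb{R}^{k\times n}$ denotes the Jacobian, so $DJ(u)^\top\alpha=\sum_i\alpha_i\nabla J_i(u)$. A point $\tilde u$ is Pareto critical for $\tilde J$ if there is $\alpha\in\Delta_k$ with $D\tilde J(\tilde u)^\top\alpha=0$. *)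

(* Defs.v *)
From Stdlib Require Import Reals.
From mathcomp Require Import ssreflect ssrfun ssrbool eqtype ssrnat seq fintype bigop.

Set Implicit Arguments.
Unset Strict Implicit.
Unset Printing Implicit Defensive.

Local Open Scope R_scope.

Definition vec (n : nat) := 'I_n -> R.

Definition vsum (n : nat) (f : 'I_n -> R) : R := \big[Rplus/0]_(i < n) f i.

Definition vdot (n : nat) (x y : vec n) : R := vsum (fun i => x i * y i).

Definition vnorm (n : nat) (x : vec n) : R := sqrt (vdot x x).

Definition vadd (n : nat) (x y : vec n) : vec n := fun i => x i + y i.
Definition vsub (n : nat) (x y : vec n) : vec n := fun i => x i - y i.

Definition has_gradient_at (n : nat) (f : vec n -> R) (u : vec n) (g : vec n) : Prop :=
  forall eps : R, 0 < eps -> exists delta : R, 0 < delta /\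
    forall h : vec n, vnorm h < delta ->
      Rabs (f (vadd u h) - f u - vdot g h) <= eps * vnorm h.

Definition vcontinuous (n : nat) (G : vec n -> vec n) : Prop :=
  forall u : vec n, forall eps : R, 0 < eps -> exists delta : R, 0 < delta /\
    forall v : vec n, vnorm (vsub v u) < delta -> vnorm (vsub (G v) (G u)) < eps.

(* J : R^n -> R^k is continuously differentiable, with gradients
   G i u = grad J_i (u) (the rows of the Jacobian DJ(u)). *)
Definition C1_with_gradients (n k : nat) (J : vec n -> vec k) (G : 'I_k -> vec n -> vec n) : Prop :=
  forall i : 'I_k,
    (forall u : vec n, has_gradient_at (fun v => J v i) u (G i u)) /\ vcontinuous (G i).

Definition in_simplex (k : nat) (a : vec k) : Prop :=
  (forall i, 0 <= a i) /\ vsum a = 1.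

Definition jacT_mul (n k : nat) (G : 'I_k -> vec n -> vec n) (u : vec n) (a : vec k) : vec n :=
  fun j => vsum (fun i => a i * G i u j).

Definition pareto_critical (n k : nat) (G : 'I_k -> vec n -> vec n) (ut : vec n) : Prop :=
  exists a : vec k, in_simplex a /\ forall j, jacT_mul G ut a j = 0.

(* u in P_2^r : min over the simplex of ||DJ(u)^T a||^2 - (a^T eps)^2 is <= 0
   (the minimum is attained by compactness, so this is: some a attains value <= 0) *)
Definition in_P2 (n k : nat) (G : 'I_k -> vec n -> vec n) (eps : vec k) (u : vec n) : Prop :=
  exists a : vec k, in_simplex a /\
    (vnorm (jacT_mul G u a)) ^ 2 - (vdot a eps) ^ 2 <= 0.

(* Main.v *)
Require Import Defs.
From Stdlib Require Import Reals Lra.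
From mathcomp Require Import ssreflect ssrfun ssrbool eqtype ssrnat seq fintype bigop.
From mathcomp Require Import Rstruct.

Local Open Scope R_scope.

Lemma vsum_add (n : nat) (f g : 'I_n -> R) :
  vsum (fun i => f i + g i) = vsum f + vsum g.
Proof. by rewrite /vsum big_split. Qed.

Lemma vsum_scal (n : nat) (r : R) (f : 'I_n -> R) :
  vsum (fun i => r * f i) = r * vsum f.
Proof. by rewrite /vsum big_distrr. Qed.

Lemma vsum_ext (n : nat) (f g : 'I_n -> R) :
  (forall i, f i = g i) -> vsum f = vsum g.
Proof. by move=> H; rewrite /vsum; apply: eq_bigr => i _. Qed.

Arguments vsum_ext {n f g} _.

Lemma vsum_nonneg (n : nat) (f : 'I_n -> R) :
  (forall i, 0 <= f i) -> 0 <= vsum f.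
Proof.
move=> H; rewrite /vsum; elim/big_ind: _ => //; first lra.
by move=> x y; lra.
Qed.

Lemma vsum_ge_term (n : nat) (f : 'I_n -> R) (j : 'I_n) :
  (forall i, 0 <= f i) -> f j <= vsum f.
Proof.
move=> H; rewrite /vsum (bigD1 j) //.
rewrite -{1}(Rplus_0_r (f j)); apply: Rplus_le_compat_l.
elim/big_ind: _ => [|x y hx hy|i _]; [lra|exact: Rplus_le_le_0_compat|exact: H].
Qed.

Lemma vdot_ge0 (n : nat) (x : vec n) : 0 <= vdot x x.
Proof. apply: vsum_nonneg => i; nra. Qed.

Lemma vdot0 (n : nat) (x : vec n) j : vdot x x = 0 -> x j = 0.
Proof.
move=> H.
have := @vsum_ge_term n (fun i => x i * x i) j (fun i => ltac:(nra)).
rewrite -/(vdot x x) H => Hj.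
nra.
Qed.

Lemma vnorm_sq (n : nat) (x : vec n) : vnorm x ^ 2 = vdot x x.
Proof. rewrite /vnorm /= Rmult_1_r sqrt_sqrt //; exact: vdot_ge0. Qed.

Lemma vnorm_ge0 (n : nat) (x : vec n) : 0 <= vnorm x.
Proof. exact: sqrt_pos. Qed.

Lemma vnorm_scal (n : nat) (r : R) (x : vec n) :
  vnorm (fun j => r * x j) = Rabs r * vnorm x.
Proof.
rewrite /vnorm /vdot.
rewrite (vsum_ext (g := fun i => (r * r) * (x i * x i))); last by move=> i; ring.
rewrite vsum_scal sqrt_mult; last exact: vdot_ge0.
  by rewrite -sqrt_Rsqr_abs.
nra.
Qed.

Arguments vnorm_ge0 {n} x.
Arguments vnorm_sq {n} x.
Arguments vdot0 {n x} j _.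
Arguments vnorm_scal {n} r x.
Arguments vdot_ge0 {n} x.
Arguments vsum_scal {n} r f.
Arguments vsum_add {n} f g.

Theorem mainTheorem3 (n k : nat) (Jr : vec n -> vec k) (Gr : 'I_k -> vec n -> vec n)
    (hJr : C1_with_gradients Jr Gr)
    (eps : vec k) (heps : forall i, 0 <= eps i)
    (ut : vec n) (hut : in_P2 Gr eps ut) :
  exists (Jt : vec n -> vec k) (Gt : 'I_k -> vec n -> vec n),
    C1_with_gradients Jt Gt /\
    (forall i : 'I_k, forall u : vec n, vnorm (vsub (Gt i u) (Gr i u)) <= eps i) /\
    pareto_critical Gt ut.
Proof.
case: hut => a [[ha0 ha1] hv].
set v := jacT_mul Gr ut a.
set s := vdot a eps.
change (vnorm v ^ 2 - s ^ 2 <= 0) in hv.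
have hs0 : 0 <= s by apply: vsum_nonneg => i; apply: Rmult_le_pos.
set t := if Req_EM_T s 0 then 0 else / s.
have ht : 0 <= t /\ t * vnorm v <= 1 /\ s * t = 1 \/ (s = 0 /\ t = 0).
  rewrite /t; case: Req_EM_T => Hs; [by right | left].
  have hsp : 0 < s by lra.
  have hn := vnorm_ge0 v.
  have hle : vnorm v <= s.
    case: (Rle_lt_dec (vnorm v) s) => // hlt.
    have : s * s < vnorm v * vnorm v by apply: Rmult_le_0_lt_compat; lra.
    rewrite /= !Rmult_1_r in hv; lra.
  split; first by apply: Rlt_le; apply: Rinv_0_lt_compat.
  split; last by rewrite Rinv_r.
  rewrite -(Rinv_l s) //; apply: Rmult_le_compat_l => //.
  by apply: Rlt_le; apply: Rinv_0_lt_compat.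
exists (fun u i => Jr u i - eps i * t * vdot v u).
exists (fun i u j => Gr i u j - eps i * t * v j).
split; [|split].
- move=> i; case: (hJr i) => hg hc; split.
  + move=> u e he; case: (hg u e he) => d [hd H]; exists d; split => // h hh.
    have -> : Jr (vadd u h) i - eps i * t * vdot v (vadd u h) -
       (Jr u i - eps i * t * vdot v u) -
       vdot (fun j => Gr i u j - eps i * t * v j) h =
       Jr (vadd u h) i - Jr u i - vdot (Gr i u) h.
      rewrite /vdot /vadd.
      rewrite (vsum_ext (f := fun j => v j * (u j + h j))
                 (g := fun j => v j * u j + v j * h j)); last by move=> j; ring.
      rewrite (vsum_ext (f := fun j => (Gr i u j - eps i * t * v j) * h j)
                 (g := fun j => Gr i u j * h j + (- (eps i * t)) * (v j * h j)));
        last by move=> j; ring.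
      rewrite !vsum_add vsum_scal; ring.
    exact: H.
  + move=> u e he; case: (hc u e he) => d [hd H]; exists d; split => // w hw.
    have -> : vsub (fun j => Gr i w j - eps i * t * v j) (fun j => Gr i u j - eps i * t * v j)
              = vsub (Gr i w) (Gr i u).
      by rewrite /vsub; apply: FunctionalExtensionality.functional_extensionality => j; ring.
    exact: H.
- move=> i u.
  have -> : vsub (fun j => Gr i u j - eps i * t * v j) (Gr i u) = (fun j => (- (eps i * t)) * v j).
    by rewrite /vsub; apply: FunctionalExtensionality.functional_extensionality => j; ring.
  rewrite vnorm_scal Rabs_Ropp.
  have hn := vnorm_ge0 v.
  have he := heps i.
  case: ht => [[ht0 [ht1 _]] | [_ ->]].
    rewrite Rabs_pos_eq; last by apply: Rmult_le_pos.
    rewrite Rmult_assoc -{2}(Rmult_1_r (eps i)); exact: Rmult_le_compat_l.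
  rewrite Rmult_0_r Rabs_R0; lra.
- exists a; split; first by split.
  move=> j; rewrite /jacT_mul.
  rewrite (vsum_ext (g := fun i => a i * Gr i ut j + (- (t * v j)) * (a i * eps i)));
    last by move=> i; ring.
  rewrite vsum_add vsum_scal -/s.
  have -> : vsum (fun i => a i * Gr i ut j) = v j by [].
  case: ht => [[_ [_ hst]] | [hs ->]].
    have -> : v j + - (t * v j) * s = v j * (1 - s * t) by ring.
    rewrite hst; ring.
  have hv0 : vdot v v = 0.
    rewrite -vnorm_sq; have := Rle_0_sqr (vnorm v); rewrite /Rsqr.
    rewrite hs /= !Rmult_1_r Rmult_0_l in hv.
    rewrite /= Rmult_1_r; lra.
  rewrite (vdot0 j hv0); ring.
Qed.
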